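(* For every integer $m\ge2$ and every $\boldsymbol{a}\in U_{\mathbb{Z}_m}$, the $m$-fold Hurwitz power satisfies $\boldsymbol{a}\star\cdots\star\boldsymbol{a}=\bar{\boldsymbol{1}}=(1,0,0,\dots)$. Consequently, for every prime $p$ and every $n\ge2$, $(U^{(n)}_{\mathbb{Z}_p},\star)$ is an abelian group of order $p^{n-1}$ in which every non-identity element has order $p$, and hence $(U^{(n)}_{\mathbb{Z}_p},\star)\cong(H^{(n-1)}_{\mathbb{Z}_p},+)$.
   Context: For a commutative ring $R$, $H_R$ is the set of sequences in $R$, $H_R^{(n)}$ the set of finite sequences $(a_0,\dots,a_{n-1})$ of length $n$ with componentwise addition, $U_R=\{\boldsymbol a\in H_R:a_0=1\}$ and $U_R^{(n)}$ the length-$n$ sequences with first term $1$. The Hurwitz product is $(\boldsymbol{a}\star\boldsymbol{b})_k=\sum_{h=0}^k\binom{k}{h}a_hb_{k-h}$ (on length-$n$ sequences, computed for $k=0,\dots,n-1$). $\mathbb{Z}_m=\mathbb{Z}/m\mathbb{Z}$. *)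

(* Defs.v *)
From HB Require Import structures.
From mathcomp Require Import all_boot all_order all_algebra.
Set Implicit Arguments. Unset Strict Implicit. Unset Printing Implicit Defensive.
Import GRing.Theory.
Local Open Scope ring_scope.


Definition hseq (R : comNzRingType) := nat -> R.

Definition hstar (R : comNzRingType) (a b : nat -> R) : nat -> R :=
  fun k => \sum_(h < k.+1) ('C(k, h))%:R * a h * b (k - h)%N.

Definition inU (R : comNzRingType) (a : nat -> R) : Prop := a 0%N = 1.

Definition hone (R : comNzRingType) : nat -> R := fun k => (k == 0%N)%:R.

Definition hpow (R : comNzRingType) (a : nat -> R) (k : nat) : nat -> R :=
  iter k (hstar a) (@hone R).

Definition hstarn (R : comNzRingType) (n : nat) (a b : n.-tuple R) : n.-tuple R :=
  [tuple \sum_(h < i.+1) ('C(i, h))%:R * a`_h * b`_(i - h) | i < n].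

Definition honen (R : comNzRingType) (n : nat) : n.-tuple R :=
  [tuple (i == 0 :> nat)%:R | i < n].

Definition hpown (R : comNzRingType) (n : nat) (a : n.-tuple R) (k : nat) : n.-tuple R :=
  iter k (hstarn a) (honen R n).

Definition Un (R : comNzRingType) (n : nat) : pred (n.-tuple R) :=
  fun a => a`_0 == 1.

Definition abelian_group_on (T : Type) (S : T -> Prop) (op : T -> T -> T) (e : T) : Prop :=
  S e /\ [/\
      (forall a b, S a -> S b -> S (op a b)),
      (forall a b c, S a -> S b -> S c -> op a (op b c) = op (op a b) c),
      (forall a b, S a -> S b -> op a b = op b a),
      (forall a, S a -> op e a = a) &
      (forall a, S a -> exists b, S b /\ op a b = e)].

Definition has_order (T : Type) (op : T -> T -> T) (e a : T) (k : nat) : Prop :=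
  (0 < k)%N /\ iter k (op a) e = e /\
  (forall j, (0 < j)%N -> (j < k)%N -> iter j (op a) e <> e).

(* Main.v *)
Require Import Defs.
From HB Require Import structures.
From mathcomp Require Import all_boot all_order all_algebra all_fingroup all_solvable.
From Stdlib Require Import FunctionalExtensionality.
Set Implicit Arguments. Unset Strict Implicit. Unset Printing Implicit Defensive.
Import GRing.Theory FinRing.Theory.
Local Open Scope ring_scope.

Definition Dsh (R : comNzRingType) (a : nat -> R) : nat -> R := fun k => a k.+1.

Lemma hstar0 (R : comNzRingType) (a b : nat -> R) : hstar a b 0 = a 0%N * b 0%N.
Proof. by rewrite /hstar big_ord_recl big_ord0 addr0 bin0 mul1r. Qed.

Lemma hstarS (R : comNzRingType) (a b : nat -> R) k :
  hstar a b k.+1 = hstar (Dsh a) b k + hstar a (Dsh b) k.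
Proof.
rewrite /hstar /Dsh big_ord_recl bin0 subn0.
under eq_bigr => i _ do rewrite /bump /= binS natrD !mulrDl subSS.
rewrite big_split /= addrA [RHS]addrC; congr (_ + _).
rewrite [RHS]big_ord_recl bin0 subn0 big_ord_recr /= bin_small // mul0r mul0r addr0.
rewrite mul1r; congr (_ + _); apply: eq_bigr => i _.
by rewrite /bump /= subnSK.
Qed.

Section S.
Variable R : comNzRingType.
Implicit Types a b c : nat -> R.

Lemma DshM a b : Dsh (hstar a b) = (fun k => hstar (Dsh a) b k + hstar a (Dsh b) k).
Proof. by apply: functional_extensionality => k; rewrite /Dsh hstarS. Qed.

Lemma hstarC k a b : hstar a b k = hstar b a k.
Proof.
elim: k a b => [|k IH] a b; first by rewrite !hstar0 mulrC.
by rewrite !hstarS IH addrC IH.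
Qed.

Lemma hstarDl k a b c : hstar (fun i => a i + b i) c k = hstar a c k + hstar b c k.
Proof. by rewrite /hstar -big_split; apply: eq_bigr => i _; rewrite mulrDr mulrDl. Qed.

Lemma hstarDr k a b c : hstar c (fun i => a i + b i) k = hstar c a k + hstar c b k.
Proof. by rewrite hstarC hstarDl !(hstarC k c). Qed.

Lemma hstarA k a b c : hstar a (hstar b c) k = hstar (hstar a b) c k.
Proof.
elim: k a b c => [|k IH] a b c; first by rewrite !hstar0 mulrA.
rewrite !hstarS !DshM hstarDl hstarDr !IH -!addrA; congr (_ + _); exact: addrC.
Qed.

Lemma hone_l k a : hstar (@hone R) a k = a k.
Proof.
rewrite /hstar big_ord_recl /hone /= bin0 mulr1 mul1r subn0 big1 ?addr0 //.
by move=> i _; rewrite /bump /= mulr0 mul0r.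
Qed.

Lemma hone_r k a : hstar a (@hone R) k = a k.
Proof. by rewrite hstarC hone_l. Qed.

Lemma hstarZr k (r : R) a c : hstar a (fun i => r * c i) k = r * hstar a c k.
Proof.
rewrite /hstar mulr_sumr; apply: eq_bigr => i _; rewrite mulrCA; congr (_ * _); exact: mulrCA.
Qed.

Lemma hstarZl k (r : R) a c : hstar (fun i => r * a i) c k = r * hstar a c k.
Proof. by rewrite hstarC hstarZr hstarC. Qed.

Lemma hpowS a j : hpow a j.+1 = hstar a (hpow a j).
Proof. by []. Qed.

Lemma hpow0 a j : a 0%N = 1 -> hpow a j 0%N = 1.
Proof. by move=> a0; elim: j => [|j IH]; rewrite ?hpowS ?hstar0 ?IH ?a0 ?mulr1. Qed.

Lemma hpowD a i j k : hpow a (i + j) k = hstar (hpow a i) (hpow a j) k.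
Proof.
elim: i k => [|i IH] k; first by rewrite add0n hone_l.
rewrite addSn hpowS.
have -> : hpow a (i + j) = hstar (hpow a i) (hpow a j).
  exact: functional_extensionality.
by rewrite hstarA.
Qed.

Lemma Dpow a j k :
  hpow a j.+1 k.+1 = j.+1%:R * hstar (hpow a j) (Dsh a) k.
Proof.
elim: j k => [|j IH] k.
  rewrite hpowS hstarS /= mul1r hone_l.
  have -> : Dsh (@hone R) = (fun i => 0 * (@hone R) i).
    by apply: functional_extensionality => i; rewrite mul0r.
  by rewrite hstarZr mul0r addr0 hone_r.
rewrite hpowS hstarS.
have -> : Dsh (hpow a j.+1) = (fun i => j.+1%:R * hstar (hpow a j) (Dsh a) i).
  by apply: functional_extensionality => i; rewrite /Dsh IH.
rewrite hstarZr hstarA (hstarC k (Dsh a)) -hpowS.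
rewrite -{1}(mul1r (hstar _ _ k)) -mulrDl; congr (_ * _); by rewrite addrC natr1.
Qed.

End S.

Lemma part1gen (m : nat) (a : nat -> 'Z_m) : inU a -> hpow a (Zp_trunc m).+2 = @hone 'Z_m.
Proof.
move=> a0; apply: functional_extensionality => -[|k].
  by rewrite hpow0 // /hone.
rewrite Dpow /hone /=.
have -> : ((Zp_trunc m).+2%:R : 'Z_m) = 0 by rewrite Zp_nat; apply: val_inj; rewrite /= modnn.
by rewrite mul0r.
Qed.

Lemma part1 (m : nat) : (1 < m)%N -> forall a : nat -> 'Z_m, inU a -> hpow a m = @hone 'Z_m.
Proof. by move=> m1 a ha; have := part1gen ha; rewrite (Zp_cast m1). Qed.

Definition sq (R : comNzRingType) n (a : n.-tuple R) : nat -> R := fun k => a`_k.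
Definition tr (R : comNzRingType) n (f : nat -> R) : nat -> R :=
  fun k => if (k < n)%N then f k else 0.

Section T.
Variable R : comNzRingType.
Variable n : nat.
Implicit Types a b c : n.-tuple R.
Implicit Types f g : nat -> R.

Lemma sq_tr a : tr n (sq a) = sq a.
Proof.
apply: functional_extensionality => k; rewrite /tr /sq.
by case: ltnP => // kn; rewrite nth_default ?size_tuple.
Qed.

Lemma sq_inj a b : sq a = sq b -> a = b.
Proof.
move=> e; apply: val_inj; apply: (@eq_from_nth _ 0); first by rewrite !size_tuple.
by move=> i _; have := congr1 (fun f => f i) e.
Qed.

Lemma sq_hstarn a b : sq (hstarn a b) = tr n (hstar (sq a) (sq b)).
Proof.
apply: functional_extensionality => k; rewrite /tr /sq.
case: ltnP => kn; last by rewrite nth_default ?size_tuple.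
by rewrite /hstarn (nth_map (Ordinal kn)) ?size_enum_ord // nth_enum_ord.
Qed.

Lemma sq_honen : sq (honen R n) = tr n (@hone R).
Proof.
apply: functional_extensionality => k; rewrite /tr /sq.
case: ltnP => kn; last by rewrite nth_default ?size_tuple.
by rewrite /honen (nth_map (Ordinal kn)) ?size_enum_ord // nth_enum_ord.
Qed.

Lemma tr_hstar_l f g : tr n (hstar (tr n f) g) = tr n (hstar f g).
Proof.
apply: functional_extensionality => k; rewrite /tr.
case: ltnP => // kn; apply: eq_bigr => i _.
by rewrite (leq_ltn_trans _ kn) // -ltnS.
Qed.

Lemma tr_hstar_r f g : tr n (hstar f (tr n g)) = tr n (hstar f g).
Proof.
apply: functional_extensionality => k; rewrite /tr.
case: ltnP => // kn; apply: eq_bigr => i _.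
by rewrite (leq_ltn_trans _ kn) // leq_subr.
Qed.

Lemma sq_hpown a k : sq (hpown a k) = tr n (hpow (sq a) k).
Proof.
elim: k => [|k IH]; first exact: sq_honen.
rewrite /hpown iterS -/(hpown a k) sq_hstarn IH tr_hstar_r.
by rewrite -{1}sq_tr tr_hstar_l.
Qed.

End T.

Section T2.
Variable R : comNzRingType.
Variable n : nat.
Implicit Types a b c : n.-tuple R.

Lemma hstarnA a b c : hstarn a (hstarn b c) = hstarn (hstarn a b) c.
Proof.
apply: sq_inj; rewrite !sq_hstarn tr_hstar_r tr_hstar_l.
by congr (tr n _); apply: functional_extensionality => k; rewrite hstarA.
Qed.

Lemma hstarnC a b : hstarn a b = hstarn b a.
Proof.
apply: sq_inj; rewrite !sq_hstarn.
by congr (tr n _); apply: functional_extensionality => k; rewrite hstarC.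
Qed.

Lemma hone_ln a : hstarn (honen R n) a = a.
Proof.
apply: sq_inj; rewrite !sq_hstarn sq_honen tr_hstar_l -[RHS]sq_tr.
by congr (tr n _); apply: functional_extensionality => k; rewrite hone_l.
Qed.

Lemma Un_sq a : (a \in @Un R n) = (sq a 0%N == 1).
Proof. by []. Qed.

Lemma hstarn_Un a b : (0 < n)%N -> a \in @Un R n -> b \in @Un R n -> hstarn a b \in @Un R n.
Proof.
move=> n0; rewrite !Un_sq sq_hstarn /tr n0 hstar0 => /eqP -> /eqP ->.
by rewrite mulr1.
Qed.

Lemma honen_Un : (0 < n)%N -> honen R n \in @Un R n.
Proof. by move=> n0; rewrite Un_sq sq_honen /tr n0. Qed.

Lemma hpown_Un a k : (0 < n)%N -> a \in @Un R n -> hpown a k \in @Un R n.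
Proof.
move=> n0; rewrite !Un_sq sq_hpown /tr n0 => /eqP a0.
by rewrite hpow0.
Qed.

End T2.

Lemma hpown_exp p n (a : n.-tuple 'Z_p) :
  a \in @Un 'Z_p n -> hpown a (Zp_trunc p).+2 = honen 'Z_p n.
Proof.
move=> /eqP a0; apply: sq_inj; rewrite sq_hpown sq_honen part1gen //.
Qed.

Definition UT (p n : nat) := {a : n.+1.-tuple 'Z_p | a \in @Un 'Z_p n.+1}.
HB.instance Definition _ p n := Finite.on (UT p n).

Definition uz p n : UT p n := exist _ (honen 'Z_p n.+1) (honen_Un _ (ltn0Sn n)).
Definition uadd p n (x y : UT p n) : UT p n :=
  exist _ (hstarn (val x) (val y)) (hstarn_Un (ltn0Sn n) (valP x) (valP y)).
Definition uopp p n (x : UT p n) : UT p n :=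
  exist _ (hpown (val x) (Zp_trunc p).+1) (hpown_Un _ (ltn0Sn n) (valP x)).

Lemma uaddA p n : associative (@uadd p n).
Proof. by move=> x y z; apply: val_inj; rewrite /= hstarnA. Qed.
Lemma uaddC p n : commutative (@uadd p n).
Proof. by move=> x y; apply: val_inj; rewrite /= hstarnC. Qed.
Lemma uadd0 p n : left_id (@uz p n) (@uadd p n).
Proof. by move=> x; apply: val_inj; rewrite /= hone_ln. Qed.
Lemma uaddN p n : left_inverse (@uz p n) (@uopp p n) (@uadd p n).
Proof.
move=> x; apply: val_inj; rewrite /= hstarnC.
by rewrite -(hpown_exp (valP x)).
Qed.

HB.instance Definition _ p n := GRing.isZmodule.Build (UT p n) (@uaddA p n) (@uaddC p n) (@uadd0 p n) (@uaddN p n).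

Lemma valX p n (x : UT p n) k : val (x *+ k) = hpown (val x) k.
Proof. by elim: k => [|k IH] //; rewrite mulrS /= IH. Qed.

Lemma natZp p : ((Zp_trunc p).+2%:R : 'Z_p) = 0.
Proof. by rewrite Zp_nat; apply: val_inj; rewrite /= modnn. Qed.

Lemma card_Un p n : #|@Un 'Z_p n.+1| = ((Zp_trunc p).+2 ^ n)%N.
Proof.
have -> : #|@Un 'Z_p n.+1| = #|[set [tuple of 1 :: t] | t : n.-tuple 'Z_p]|.
  apply: eq_card => t; apply/idP/imsetP.
    move=> /eqP t0; exists (behead_tuple t) => //.
    by apply: val_inj; rewrite /= -t0; case: t {t0} => -[|x s].
  by case=> u _ ->; rewrite Un_sq.
rewrite card_imset; last by move=> u v /(congr1 val) [] /val_inj.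
by rewrite card_tuple card_ord.
Qed.

Lemma mxZp p n (x : 'rV['Z_p]_n) : x *+ (Zp_trunc p).+2 = 0.
Proof. by rewrite -scaler_nat natZp scale0r. Qed.

Lemma iso p n : prime p -> exists f : n.+1.-tuple 'Z_p -> 'rV['Z_p]_n,
  (forall a b, a \in @Un 'Z_p n.+1 -> b \in @Un 'Z_p n.+1 -> f a = f b -> a = b)
  /\ (forall v, exists2 a, a \in @Un 'Z_p n.+1 & f a = v)
  /\ (forall a b, a \in @Un 'Z_p n.+1 -> b \in @Un 'Z_p n.+1 ->
        f (hstarn a b) = f a + f b).
Proof.
move=> pp; have p1 := prime_gt1 pp; have M := Zp_cast p1.
pose G := [set: (UT p n : finZmodType)]%G.
pose H := [set: 'rV['Z_p]_n]%G.
have abG : (p.-abelem G)%g.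
  apply/abelemP => //; split; first exact: zmod_abelian.
  have e : forall k, k = (Zp_trunc p).+2 -> forall x : UT p n, x *+ k = 0.
    move=> k -> x; apply: val_inj; rewrite valX hpown_exp //; exact: valP.
  by move=> x _; rewrite zmodXgE (e p).
have abH : (p.-abelem H)%g.
  apply/abelemP => //; split; first exact: zmod_abelian.
  have e : forall k, k = (Zp_trunc p).+2 -> forall x : 'rV['Z_p]_n, x *+ k = 0.
    by move=> k -> x; apply: mxZp.
  by move=> x _; rewrite zmodXgE (e p).
have cGH : #|H| = #|G|.
  rewrite !cardsT card_mx card_ord mul1n.
  have -> : #|{: UT p n}| = #|@Un 'Z_p n.+1| by rewrite card_sig; apply: eq_card.
  by rewrite card_Un.
have : (G \isog H)%g by rewrite (isog_abelem_card _ abG) abH cGH eqxx.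
case/isogP => f /injmP injf imf.
pose F (a : n.+1.-tuple 'Z_p) := f (insubd (uz p n) a : UT p n).
exists F; split; [|split].
- move=> a b ua ub /injf e.
  by rewrite -(insubdK (uz p n) ua) -(insubdK (uz p n) ub) e // inE.
- move=> v; have : v \in (f @* G)%g by rewrite imf inE.
  case/morphimP => x _ _ ->; exists (val x); first exact: valP.
  rewrite /F; suff -> : insubd (uz p n) (val x) = x :> UT p n by [].
  by apply: val_inj; rewrite insubdK //; exact: valP.
- move=> a b ua ub; rewrite /F -zmodMgE -morphM ?inE //.
  suff -> : insubd (uz p n) (hstarn a b) = uadd (insubd (uz p n) a) (insubd (uz p n) b) by [].
  apply: val_inj; rewrite /= !insubdK //.
  exact: hstarn_Un.
Qed.

Lemma trM (R : comNzRingType) n (X Y Z : nat -> R) :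
  tr n X = tr n (@hone R) -> tr n Y = tr n Z -> tr n (hstar X Y) = tr n Z.
Proof.
move=> hX hY; rewrite -tr_hstar_l -tr_hstar_r hX hY tr_hstar_r tr_hstar_l.
by congr (tr n _); apply: functional_extensionality => k; rewrite hone_l.
Qed.

Lemma trpow (R : comNzRingType) n (f : nat -> R) j :
  tr n (hpow f j) = tr n (@hone R) -> forall q, tr n (hpow f (q * j)) = tr n (@hone R).
Proof.
move=> h; elim => [|q IH] //; rewrite mulSn.
have -> : hpow f (j + q * j) = hstar (hpow f j) (hpow f (q * j)).
  by apply: functional_extensionality => k; rewrite hpowD.
exact: trM.
Qed.

Lemma hpown_exp' p n (a : n.-tuple 'Z_p) k :
  k = (Zp_trunc p).+2 -> a \in @Un 'Z_p n -> hpown a k = honen 'Z_p n.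
Proof. by move=> ->; apply: hpown_exp. Qed.

Lemma order_p p n (a : n.-tuple 'Z_p) : prime p -> a \in @Un 'Z_p n -> a <> honen 'Z_p n ->
  has_order (@hstarn 'Z_p n) (honen 'Z_p n) a p.
Proof.
move=> pp ua ne; have p1 := prime_gt1 pp; have M := Zp_cast p1.
split; first exact: prime_gt0.
split; first exact: (hpown_exp' (esym M) ua).
move=> j j0 jp hj; apply: ne.
have hj' : tr n (hpow (sq a) j) = tr n (@hone 'Z_p).
  by rewrite -sq_hpown -sq_honen; exact: (congr1 (@sq _ _) hj).
have hp' : tr n (hpow (sq a) p) = tr n (@hone 'Z_p).
  by rewrite -sq_hpown -sq_honen (hpown_exp' (esym M) ua).
have cop : coprime j p.
  rewrite coprime_sym prime_coprime //; apply/negP => /(dvdn_leq j0).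
  by rewrite leqNgt jp.
have [km kn e _] := egcdnP p j0.
have h1 := trpow hj' km.
rewrite e (eqP cop) addn1 in h1.
have h2 : tr n (hpow (sq a) (kn * p).+1) = tr n (hpow (sq a) 1).
  rewrite -addn1.
  have -> : hpow (sq a) (kn * p + 1) = hstar (hpow (sq a) (kn * p)) (hpow (sq a) 1).
    by apply: functional_extensionality => k; rewrite hpowD.
  by apply: trM => //; exact: trpow.
have h3 : hpow (sq a) 1 = sq a.
  by apply: functional_extensionality => k; rewrite hpowS hone_r.
apply: sq_inj; rewrite -sq_tr -h3 -h2 h1 sq_honen //.
Qed.

Theorem mainTheorem7 :
  (forall (m : nat), (1 < m)%N ->
     forall a : nat -> 'Z_m, inU a -> hpow a m = @hone 'Z_m)
  /\
  (forall (p n : nat), prime p -> (1 < n)%N ->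
     abelian_group_on (fun a => a \in @Un 'Z_p n) (@hstarn 'Z_p n) (@honen 'Z_p n)
     /\ #|@Un 'Z_p n| = (p ^ n.-1)%N
     /\ (forall a : n.-tuple 'Z_p, a \in @Un 'Z_p n -> a <> @honen 'Z_p n ->
           has_order (@hstarn 'Z_p n) (@honen 'Z_p n) a p)
     /\ (exists f : n.-tuple 'Z_p -> 'rV['Z_p]_(n.-1),
           (forall a b, a \in @Un 'Z_p n -> b \in @Un 'Z_p n -> f a = f b -> a = b)
           /\ (forall v, exists2 a, a \in @Un 'Z_p n & f a = v)
           /\ (forall a b, a \in @Un 'Z_p n -> b \in @Un 'Z_p n ->
                 f (@hstarn 'Z_p n a b) = f a + f b))).
Proof.
split; first exact: part1.
move=> p [//|n] pp n1; have p1 := prime_gt1 pp; have M := Zp_cast p1.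
split; [|split; [|split]].
- split; first exact: honen_Un.
  split.
  + by move=> a b; apply: hstarn_Un.
  + by move=> a b c _ _ _; apply: hstarnA.
  + by move=> a b _ _; apply: hstarnC.
  + by move=> a _; apply: hone_ln.
  + move=> a ua; exists (hpown a (Zp_trunc p).+1); split; first exact: hpown_Un.
    by rewrite -(hpown_exp ua).
- by rewrite card_Un M.
- by move=> a ua ne; apply: order_p.
- exact: iso.
Qed.
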